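(* Let $P$ be a $d$-dimensional $k$-template and let $m\ge d$. Then there is an $m$-dimensional $k$-template $Q$ such that $e(Q)=e(P)$, $P=\{x\restriction d : x\in Q\}$, and for every infinite set $X$, $L(X^m,Q)$ is embeddable into $L(X^d,P)$.
   Context: Here $1\le d<\omega$, $2\le k<\omega$. A $d$-dimensional $k$-template is a set $P$ of $d$-tuples with $|P|=k$. If $P,Q$ are $d$-dimensional templates, $Q$ is a homomorphic image of $P$ if there is a surjection $f:P\to Q$ such that for all $x,y\in P$ and $i<d$, $x_i=y_i$ implies $f(x)_i=f(y)_i$. $L(X^d,P)$ is the $k$-hypergraph with vertex set $X^d$ whose edges are the $k$-templates $R\subseteq X^d$ that are homomorphic images of $P$. A set $I\subseteq\{0,\dots,d-1\}$ is a distinguisher for $P$ if for all distinct $x,y\in P$ there is $i\in I$ with $x_i\ne y_i$; $e(P)$ is the least cardinality of a distinguisher. $x\restriction d$ is the tuple of the first $d$ coordinates of $x$. A map $f:V_1\to V_2$ embeds a $k$-hypergraph $H_1=(V_1,E_1)$ into $H_2=(V_2,E_2)$ if it is an isomorphism of $H_1$ onto a subhypergraph of $H_2$ (a hypergraph $(V',E')$ with $V'\subseteq V_2$, $E'\subseteq E_2$). *)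

(* Defs.v *)
From mathcomp Require Import all_boot.
From mathcomp Require Import boolp classical_sets functions cardinality.
Set Implicit Arguments. Unset Strict Implicit. Unset Printing Implicit Defensive.
Local Open Scope classical_set_scope.
Local Open Scope card_scope.

Definition template (d k : nat) (P : set ('I_d -> nat)) : Prop := P #= `I_k.

Definition hom_image (d : nat) (A B : Type)
    (P : set ('I_d -> A)) (R : set ('I_d -> B)) : Prop :=
  exists f : ('I_d -> A) -> ('I_d -> B),
    [/\ (forall x, P x -> R (f x)),
        (forall y, R y -> exists2 x, P x & f x = y) &
        (forall x y, P x -> P y -> forall i : 'I_d, x i = y i -> f x i = f y i)].

(* Edge set of the k-hypergraph L(X^d, P) (vertex set: all of X^d). *)
Definition Ledges (X : Type) (d k : nat) (P : set ('I_d -> nat))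
    : set (set ('I_d -> X)) :=
  [set R | R #= `I_k /\ hom_image P R].

Definition distinguisher (d : nat) (A : Type) (P : set ('I_d -> A))
    (I : {set 'I_d}) : Prop :=
  forall x y, P x -> P y -> x <> y -> exists2 i, i \in I & x i <> y i.

(* least cardinality of a distinguisher (the full index set always is one) *)
Definition e (d : nat) (A : Type) (P : set ('I_d -> A)) : nat :=
  \big[minn/d]_(I : {set 'I_d} | `[< distinguisher P I >]) #|I|.

Definition restr (d m : nat) (hdm : (d <= m)%N) (A : Type) (x : 'I_m -> A)
    : 'I_d -> A :=
  fun i => x (widen_ord hdm i).

Definition embeds (V1 V2 : Type) (E1 : set (set V1)) (E2 : set (set V2)) : Prop :=
  exists f : V1 -> V2, exists V' : set V2, exists E' : set (set V2),
    [/\ set_bij [set: V1] V' f,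
        E' `<=` E2,
        (forall e', E' e' -> e' `<=` V') &
        (forall e1 : set V1, E1 e1 <-> E' (f @` e1))].

(* Main.v *)
Require Import Defs.
From mathcomp Require Import all_boot.
From mathcomp Require Import boolp classical_sets functions cardinality.
Set Implicit Arguments. Unset Strict Implicit.
Local Open Scope classical_set_scope.

Definition pinj (X : Type) (A C : set X) :=
  exists h : X -> X, (forall a, A a -> C (h a)) /\
    (forall a b, A a -> A b -> h a = h b -> a = b).

Lemma compar (X : Type) (A C : set X) : pinj A C \/ pinj C A.
Proof.
pose PG := fun G : set (X * X) =>
  [/\ (forall p, G p -> A p.1 /\ C p.2),
      (forall a c c', G (a, c) -> G (a, c') -> c = c') &
      (forall a a' c, G (a, c) -> G (a', c) -> a = a')].
have [G0 [[PG1 PG2 PG3] G0max]] : exists G, PG G /\ forall B, G `<` B -> ~ PG B.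
  apply: Zorn_bigcup => F FP Ftot; split.
  - by move=> p [G FG Gp]; have [H1 _ _] := FP _ FG; exact: H1.
  - move=> a c c' [G1 F1 G1p] [G2 F2 G2p].
    have [S12|S21] := Ftot _ _ F1 F2.
      by have [_ H _] := FP _ F2; apply: H (S12 _ G1p) G2p.
    by have [_ H _] := FP _ F1; apply: H G1p (S21 _ G2p).
  - move=> a a' c [G1 F1 G1p] [G2 F2 G2p].
    have [S12|S21] := Ftot _ _ F1 F2.
      by have [_ _ H] := FP _ F2; apply: H (S12 _ G1p) G2p.
    by have [_ _ H] := FP _ F1; apply: H G1p (S21 _ G2p).
have [dom|ndom] := pselect (forall a, A a -> exists c, G0 (a, c)).
  left.
  have : forall a, exists c, A a -> G0 (a, c).
    move=> a; have [Aa|nA] := pselect (A a).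
      by have [c Hc] := dom a Aa; exists c.
    by exists a.
  move=> /choice [h hP].
  exists h; split.
    by move=> a Aa; have [] := PG1 _ (hP a Aa).
  move=> a b Aa Ab hab; apply: (PG3 _ _ (h a)) (hP a Aa) _.
  by rewrite hab; exact: hP.
have [rng|nrng] := pselect (forall c, C c -> exists a, G0 (a, c)).
  right.
  have : forall c, exists a, C c -> G0 (a, c).
    move=> c; have [Cc|nC] := pselect (C c).
      by have [a Ha] := rng c Cc; exists a.
    by exists c.
  move=> /choice [h hP].
  exists h; split.
    by move=> c Cc; have [] := PG1 _ (hP c Cc).
  move=> a b Ca Cb hab; apply: (PG2 (h a)) (hP a Ca) _.
  by rewrite hab; exact: hP.
exfalso.
move/existsNP: ndom => [a0 /not_implyP [Aa0 na0]].
move/existsNP: nrng => [c0 /not_implyP [Cc0 nc0]].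
apply: (G0max (G0 `|` [set (a0, c0)])).
  split; first by move=> p Gp; left.
  move=> /(_ (a0, c0)) H; apply: na0; exists c0; apply: H; by right.
split.
- by move=> p [/PG1 //|-> /=].
- move=> a c c' [H1|/= E1] [H2|/= E2].
  + exact: PG2 H1 H2.
  + by case: E2 => ? ?; subst; exfalso; apply: na0; exists c.
  + by case: E1 => ? ?; subst; exfalso; apply: na0; exists c'.
  + by case: E1 => _ ->; case: E2 => _ ->.
- move=> a a' c [H1|/= E1] [H2|/= E2].
  + exact: PG3 H1 H2.
  + by case: E2 => ? ?; subst; exfalso; apply: nc0; exists a.
  + by case: E1 => ? ?; subst; exfalso; apply: nc0; exists a'.
  + by case: E1 => -> _; case: E2 => -> _.
Qed.

Section XX.
Variables (X : Type) (e : nat -> X) (e_inj : injective e).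

Definition Good (p : set X * (X -> X -> X)) :=
  [/\ (forall n, p.1 (e n)), (forall a b, p.1 a -> p.1 b -> p.1 (p.2 a b)) &
      (forall a b c d, p.1 a -> p.1 b -> p.1 c -> p.1 d -> p.2 a b = p.2 c d -> a = c /\ b = d)].

Definition GT := {p : set X * (X -> X -> X) | Good p}.
Definition dom (s : GT) := (sval s).1.
Definition fn (s : GT) := (sval s).2.
Definition Rle (s t : GT) : Prop := dom s `<=` dom t /\
   forall a b, dom s a -> dom s b -> fn s a b = fn t a b.

Lemma Rle_refl s : Rle s s. Proof. by split. Qed.
Lemma Rle_trans r s t : Rle r s -> Rle s t -> Rle r t.
Proof.
move=> [D1 E1] [D2 E2]; split; first by move=> x /D1 /D2.
by move=> a b Ha Hb; rewrite E1 // E2 //; apply: D1.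
Qed.

Lemma t0_good : exists f, Good (range e, f).
Proof.
have : forall x, exists n, range e x -> e n = x.
  by move=> x; have [[n _ <-]|nx] := pselect (range e x); [exists n|exists 0].
move=> /choice [einv einvP].
have einvK n : einv (e n) = n by apply: e_inj; apply: einvP; exists n.
exists (fun a b => e (pickle (einv a, einv b))); split => /=.
- by move=> n; exists n.
- by move=> a b _ _; exists (pickle (einv a, einv b)).
- move=> a b c d [na _ <-] [nb _ <-] [nc _ <-] [nd _ <-] /e_inj/(pcan_inj (@pickleK_inv _)).
  by rewrite !einvK => -[-> ->].
Qed.


Lemma chain_ub (F : set GT) : (forall s t, F s -> F t -> Rle s t \/ Rle t s) ->
  exists t, forall s, F s -> Rle s t.
Proof.
move=> Ftot.
have [[s0 Fs0]|F0] := pselect (exists s, F s); last first.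
  have [f0 G0] := t0_good.
  exists (exist _ _ G0) => s Fs; exfalso; apply: F0; by exists s.
pose U := fun x => exists2 s, F s & dom s x.
have : forall ab : X * X, exists s : GT, U ab.1 -> U ab.2 -> [/\ F s, dom s ab.1 & dom s ab.2].
  move=> [a b]; have [[[s1 F1 H1] [s2 F2 H2]]|] := pselect (U a /\ U b); last first.
    by move=> nab; exists s0 => Ua Ub; exfalso; apply: nab.
  have [[D E]|[D E]] := Ftot _ _ F1 F2.
    by exists s2 => _ _; split => //; apply: D.
  by exists s1 => _ _; split => //; apply: D.
move=> /choice [sel' selP'].
pose sel a b := sel' (a, b).
have selP a b : U a -> U b -> [/\ F (sel a b), dom (sel a b) a & dom (sel a b) b].
  exact: (selP' (a, b)).
pose g a b := fn (sel a b) a b.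
have key s a b : F s -> dom s a -> dom s b -> g a b = fn s a b.
  move=> Fs Ha Hb.
  have [F' Ha' Hb'] := selP a b (ex_intro2 _ _ s Fs Ha) (ex_intro2 _ _ s Fs Hb).
  rewrite /g; have [[D E]|[D E]] := Ftot _ _ F' Fs.
    exact: E.
  by rewrite E.
have two s1 s2 : F s1 -> F s2 -> exists2 s, F s & dom s1 `<=` dom s /\ dom s2 `<=` dom s.
  move=> F1 F2; have [[D E]|[D E]] := Ftot _ _ F1 F2.
    by apply: (ex_intro2 _ _ s2) => //; split => // x /D.
  by apply: (ex_intro2 _ _ s1) => //; split => // x /D.
have gG : Good (U, g).
  split => /=.
  - by move=> n; apply: (ex_intro2 _ _ s0) => //; case: (svalP s0) => H _ _; apply: H.
  - move=> a b Ua Ub; have [F' Ha Hb] := selP a b Ua Ub.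
    by apply: (ex_intro2 _ _ (sel a b)) => //; rewrite /g; case: (svalP (sel a b)) => _ H _; apply: H.
  - move=> a b c d [sa Fa Ha] [sb Fb Hb] [sc Fc Hc] [sd Fd Hd].
    have [sab Fab [Sa Sb]] := two _ _ Fa Fb.
    have [scd Fcd [Sc Sd]] := two _ _ Fc Fd.
    have [s Fs [S1 S2]] := two _ _ Fab Fcd.
    rewrite !(key s) //; try by [apply: S1; apply: Sa|apply: S1; apply: Sb
        |apply: S2; apply: Sc|apply: S2; apply: Sd].
    case: (svalP s) => _ _ H; apply: H; by [apply: S1; apply: Sa|apply: S1; apply: Sb
        |apply: S2; apply: Sc|apply: S2; apply: Sd].
exists (exist _ _ gG) => s Fs; split.
  by move=> x Hx; apply: (ex_intro2 _ _ s).
by move=> a b Ha Hb; rewrite /fn /= (key s).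
Qed.


Lemma XX : exists G : X -> X -> X, forall a b c d, G a b = G c d -> a = c /\ b = d.
Proof.
have [f0 G0] := t0_good.
have [t tmax] : exists t, premaximal (fun s t : GT => `[< Rle s t >]) t.
  apply: (@ZL_preorder GT (exist _ _ G0)).
- by move=> s; apply/asboolP; exact: Rle_refl.
- by move=> r s u /asboolP H1 /asboolP H2; apply/asboolP; exact: Rle_trans H1 H2.
- move=> F Ftot; have [|u Hu] := @chain_ub F.
    move=> s u Fs Fu; have [/asboolP|/asboolP] := Ftot _ _ Fs Fu; by [left|right].
  by exists u => s /Hu H; apply/asboolP.
pose A := dom t; pose f := fn t.
have [eA cA iA] : [/\ (forall n, A (e n)), (forall a b, A a -> A b -> A (f a b)) &
  (forall a b c d, A a -> A b -> A c -> A d -> f a b = f c d -> a = c /\ b = d)].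
  by exact: (svalP t).
have [[h [hA hinj]]|[h [hA hinj]]] := compar A (~` A); last first.
  pose j x := if `[< A x >] then f x (e 0) else f (h x) (e 1).
  have jA x : A (j x).
    by rewrite /j; case: asboolP => Ax; apply: (cA) => //; apply: (hA).
  have jinj x y : j x = j y -> x = y.
    rewrite /j; case: (asboolP (A x)) => Ax; case: (asboolP (A y)) => Ay.
    - by move=> E; have [] := iA _ _ _ _ Ax (eA 0) Ay (eA 0) E.
    - by move=> E; have [_ /e_inj] := iA _ _ _ _ Ax (eA 0) (hA _ Ay) (eA 1) E.
    - by move=> E; have [_ /e_inj] := iA _ _ _ _ (hA _ Ax) (eA 1) Ay (eA 0) E.
    - move=> E; have [+ _] := iA _ _ _ _ (hA _ Ax) (eA 1) (hA _ Ay) (eA 1) E.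
      by apply: (hinj).
  exists (fun a b => f (j a) (j b)) => a b c d E.
  by have [/jinj -> /jinj ->] := iA _ _ _ _ (jA a) (jA b) (jA c) (jA d) E.
exfalso.
have : forall y, exists x, (exists2 a, A a & h a = y) -> A x /\ h x = y.
  move=> y; have [[a Aa ha]|] := pselect (exists2 a, A a & h a = y); last first.
    by move=> N; exists y => H; exfalso; exact: N H.
  by exists a => _; split.
move=> /choice [k kP].
pose B y := exists2 a, A a & h a = y.
pose A' x := A x \/ B x.
have kh a : A a -> k (h a) = a.
  move=> Aa; have [Ak hk] := kP (h a) (ex_intro2 _ _ a Aa erefl).
  exact: hinj hk.
pose p x := if `[< A x >] then x else k x.
have pA x : A' x -> A (p x).
  rewrite /p; case: asboolP => // Ax [//|[a Aa <-]]; by rewrite kh.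
have peq u v : A' u -> A' v -> (A u <-> A v) -> p u = p v -> u = v.
  rewrite /p; case: (asboolP (A u)) => Au; case: (asboolP (A v)) => Av //.
  - by move=> _ _ [/(_ Au)].
  - by move=> _ _ [_ /(_ Av)].
  move=> [//|[a Aa <-]] [//|[b Ab <-]] _; by rewrite !kh // => ->.
pose tg x y : nat := if `[< A x >] then 0 else if `[< A y >] then 1 else 2.
pose g x y := if `[< A x >] && `[< A y >] then f x y
  else h (f (f (p x) (p y)) (e (tg x y))).
have gin x y : A' x -> A' y -> ~~ (`[< A x >] && `[< A y >]) ->
    A (f (f (p x) (p y)) (e (tg x y))).
  by move=> Hx Hy _; apply: (cA) => //; apply: (cA); apply: (pA).
have gG : Good (A', g).
  split => /=.
  - by move=> n; left.
  - move=> x y Hx Hy; rewrite /g; case: ifP => [/andP[/asboolP Ax /asboolP Ay]|/negbT H].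
      by left; apply: (cA).
    by right; exists (f (f (p x) (p y)) (e (tg x y))) => //; apply: gin.
  - move=> x y z w Hx Hy Hz Hw; rewrite /g.
    case: ifP => [/andP[/asboolP Ax /asboolP Ay]|/negbT H1];
      case: ifP => [/andP[/asboolP Az /asboolP Aw]|/negbT H2].
    + by move/iA; apply.
    + move=> E; have := hA _ (gin _ _ Hz Hw H2); rewrite /= -E.
      by move=> /(_ (cA _ _ Ax Ay)).
    + move=> E; have := hA _ (gin _ _ Hx Hy H1); rewrite /= E.
      by move=> /(_ (cA _ _ Az Aw)).
    move=> E; have := hinj _ _ (gin _ _ Hx Hy H1) (gin _ _ Hz Hw H2) E.
    move=> E2; have [E3 /e_inj Etg] := iA _ _ _ _ (cA _ _ (pA _ Hx) (pA _ Hy)) (eA _)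
      (cA _ _ (pA _ Hz) (pA _ Hw)) (eA _) E2.
    have [Epx Epy] := iA _ _ _ _ (pA _ Hx) (pA _ Hy) (pA _ Hz) (pA _ Hw) E3.
    suff [Exz Eyw] : (A x <-> A z) /\ (A y <-> A w).
      by split; apply: (peq).
    move: H1 H2 Etg; rewrite /tg.
    case: (asboolP (A x)) => Ax; case: (asboolP (A y)) => Ay;
    case: (asboolP (A z)) => Az; case: (asboolP (A w)) => Aw //= _ _ _; by [].
have : `[< Rle t (exist _ _ gG) >].
  apply/asboolP; split; first by move=> x Ax; left.
  move=> a b Aa Ab; rewrite /fn /= /g.
  by case: asboolP => // _; case: asboolP.
move=> /tmax /asboolP [D _].
have Ae0 : A (e 0) by apply: (eA).
have : A' (h (e 0)) by right; exists (e 0).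
by move=> /D; apply: (hA).
Qed.

End XX.
Lemma pow_inj (X : Type) (x0 : X) (G : X -> X -> X)
  (HG : forall a b c d, G a b = G c d -> a = c /\ b = d) n :
  exists E : ('I_n -> X) -> X, injective E.
Proof.
elim: n => [|n [E Einj]].
  by exists (fun _ => x0) => u v _; apply: funext => -[].
exists (fun u => G (u ord0) (E (fun i => u (lift ord0 i)))) => u v /HG [E0 /Einj Et].
apply: funext => i; case: (unliftP ord0 i) => [j ->|->] //.
exact: (congr1 (fun w => w j) Et).
Qed.

Section Bigmin.
Variables (I : finType) (p : pred I) (F : I -> nat) (n0 : nat).

Lemma bigmin_le i : p i -> \big[minn/n0]_(j | p j) F j <= F i.
Proof.
move=> pi; rewrite unlock; have : i \in index_enum I by rewrite mem_index_enum.
elim: (index_enum I) => // a r IH; rewrite inE /= => /orP [/eqP <-|ir].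
  by rewrite pi geq_minl.
by case: (p a) => //=; [exact: leq_trans (geq_minr _ _) (IH ir)|exact: IH].
Qed.

Lemma bigmin_ex i : p i -> F i <= n0 ->
  exists2 j, p j & \big[minn/n0]_(j | p j) F j = F j.
Proof.
move=> pi Fi.
have : \big[minn/n0]_(j | p j) F j = n0 \/ exists2 j, p j & \big[minn/n0]_(j | p j) F j = F j.
  apply: (big_ind (fun x => x = n0 \/ exists2 j, p j & x = F j)).
  - by left.
  - move=> x y Hx Hy /=; case: (leqP x y) => H.
      by [].
    by [].
  - by move=> j pj; right; exists j.
case=> // E; exists i => //; apply/eqP; rewrite eqn_leq bigmin_le //=.
by rewrite E.
Qed.
End Bigmin.

Section Main.
Variables (d m : nat) (hd : (1 <= d)%N) (hdm : (d <= m)%N).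

Definition o0 : 'I_d := Ordinal hd.
Definition prj (j : 'I_m) : 'I_d := insubd o0 (val j).
Definition ext (A : Type) (x : 'I_d -> A) : 'I_m -> A := fun j => x (prj j).

Lemma prj_widen i : prj (widen_ord hdm i) = i.
Proof. by apply: val_inj; rewrite /prj insubdK //=; exact: ltn_ord. Qed.

Lemma prj_ge (j : 'I_m) : ~~ (val j < d)%N -> prj j = o0.
Proof. by move=> H; rewrite /prj /insubd insubN. Qed.

Lemma widen_inj : injective (widen_ord hdm).
Proof. by move=> i j /(congr1 val) /= /val_inj. Qed.

Lemma restr_ext (A : Type) (x : 'I_d -> A) : restr hdm (ext x) = x.
Proof. by apply: funext => i; rewrite /restr /ext prj_widen. Qed.

Lemma ext_inj (A : Type) : injective (@ext A).
Proof. by move=> x y /(congr1 (@restr d m hdm A)); rewrite !restr_ext. Qed.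


Lemma full_dist (n : nat) (A : Type) (S : set ('I_n -> A)) : distinguisher S [set: 'I_n]%SET.
Proof.
move=> x y _ _ nxy.
have [i Hi] : exists i, x i <> y i.
  by apply/existsNP => H; apply: nxy; exact: funext H.
by exists i; rewrite ?inE.
Qed.

Lemma e_le (n : nat) (A : Type) (S : set ('I_n -> A)) I : distinguisher S I -> e S <= #|I|.
Proof. by move=> H; apply: bigmin_le; apply/asboolP. Qed.

Lemma e_ex (n : nat) (A : Type) (S : set ('I_n -> A)) :
  exists2 I, distinguisher S I & e S = #|I|.
Proof.
have H1 : `[< distinguisher S [set: 'I_n]%SET >] by exact/asboolP/full_dist.
have H2 : #|[set: 'I_n]%SET| <= n by rewrite cardsT card_ord.
have [I /asboolP HI E] := @bigmin_ex _ (fun I : {set 'I_n} => `[< distinguisher S I >])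
  (fun I => #|I|) n _ H1 H2.
by exists I.
Qed.

Lemma eQP (P : set ('I_d -> nat)) : e [set ext x | x in P] = e P.
Proof.
apply/eqP; rewrite eqn_leq; apply/andP; split.
  have [I0 HI0 ->] := e_ex P.
  rewrite -(card_imset I0 widen_inj); apply: e_le.
  move=> _ _ [a Pa <-] [b Pb <-] nab.
  have [i Ii Hi] := HI0 a b Pa Pb (fun E => nab (congr1 _ E)).
  exists (widen_ord hdm i); first by apply/imsetP; exists i.
  by rewrite /ext prj_widen.
have [J0 HJ0 ->] := e_ex [set ext x | x in P].
apply: leq_trans (leq_imset_card prj J0); apply: e_le.
move=> a b Pa Pb nab.
have [j Jj Hj] := HJ0 (ext a) (ext b) (ex_intro2 _ _ a Pa erefl) (ex_intro2 _ _ b Pb erefl)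
  (fun E => nab (ext_inj E)).
by exists (prj j); [apply/imsetP; exists j|].
Qed.


Section Emb.
Variables (X : Type) (Em : ('I_m -> X) -> X) (Eminj : injective Em).

Definition mask (x : 'I_m -> X) : 'I_m -> X :=
  fun j => if (val j < d)%N then x (widen_ord hdm o0) else x j.

Definition FF (x : 'I_m -> X) : 'I_d -> X :=
  fun i => if val i == 0%N then Em (mask x) else x (widen_ord hdm i).

Lemma FF_inj : injective FF.
Proof.
move=> x y E; apply: funext => j.
have E0 : Em (mask x) = Em (mask y).
  by have := congr1 (fun f => f o0) E; rewrite /FF /=.
have /Eminj Em' := E0.
case: (ltnP (val j) d) => jd.
  have wj : widen_ord hdm (prj j) = j.
    by apply: val_inj; rewrite /= /prj insubdK.
  case: (eqVneq (val j) 0%N) => j0.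
    have := congr1 (fun f => f j) Em'; rewrite /mask jd.
    suff -> : widen_ord hdm o0 = j by [].
    by apply: val_inj; rewrite /= j0.
  have := congr1 (fun f => f (prj j)) E; rewrite /FF.
  have -> : val (prj j) = val j by rewrite /prj insubdK.
  by rewrite (negbTE j0) wj.
have := congr1 (fun f => f j) Em'; rewrite /mask.
by rewrite ltnNge jd.
Qed.

Lemma emb (k : nat) (P : set ('I_d -> nat)) :
  embeds (@Ledges X m k [set ext x | x in P]) (@Ledges X d k P).
Proof.
exists FF, (range FF), [set FF @` r | r in Ledges k [set ext x | x in P]]; split.
- split; first by move=> x _; exists x.
  + by move=> x y _ _; exact: FF_inj.
  + by move=> _ [x _ <-]; exists x.
- move=> _ [r [Rk [g [g1 g2 g3]]] <-]; split.
    apply: card_eq_trans Rk; apply: inj_card_eq => x y _ _; exact: FF_inj.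
  exists (fun p => FF (g (ext p))); split.
  + by move=> a Pa; exists (g (ext a)) => //; apply: g1; exists a.
  + move=> _ [z /g2 [q [a Pa <-] gq] <-]; exists a => //; by rewrite gq.
  + move=> a b Pa Pb i Eab.
    have Qa : [set ext x | x in P] (ext a) by exists a.
    have Qb : [set ext x | x in P] (ext b) by exists b.
    rewrite /FF; case: eqVneq => i0.
      have io : i = o0 by apply: val_inj; rewrite i0.
      congr Em; apply: funext => j; rewrite /mask; case: ifP => jd.
        by apply: g3 => //; rewrite /ext prj_widen -io.
      by apply: g3 => //; rewrite /ext prj_ge ?jd // -io.
    by apply: g3 => //; rewrite /ext prj_widen.
- by move=> _ [r _ <-] _ [x _ <-]; exists x.
- move=> e1; split; first by move=> H; exists e1.
  move=> [r Hr Er].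
  suff <- : r = e1 by [].
  apply/seteqP; split => x Hx.
    have : (FF @` e1) (FF x) by rewrite -Er; exists x.
    by move=> [y Hy /FF_inj <-].
  have : (FF @` r) (FF x) by rewrite Er; exists x.
  by move=> [y Hy /FF_inj <-].
Qed.

End Emb.
End Main.

Lemma nat_inj (X : Type) : infinite_set [set: X] -> exists e : nat -> X, injective e.
Proof.
move=> /infiniteP /card_leP [f].
exists (fun n => val (f (exist _ n (mem_set I)))).
move=> a b /= /val_inj H.
have := @inj _ _ _ f (exist _ a (mem_set I)) (exist _ b (mem_set I)).
by move=> /(_ (mem_set I) (mem_set I) H) [].
Qed.

Unset Implicit Arguments. Set Strict Implicit.

Theorem lemma1p10 (d k m : nat) (hd : (1 <= d)%N) (hk : (2 <= k)%N)
    (hdm : (d <= m)%N) (P : set ('I_d -> nat)) :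
  template k P ->
  exists Q : set ('I_m -> nat),
    [/\ template k Q,
        e Q = e P,
        P = [set restr hdm x | x in Q] &
        forall X : Type, infinite_set [set: X] ->
          embeds (@Ledges X m k Q) (@Ledges X d k P)].
Proof.
move=> HP; exists [set @ext d m hd nat x | x in P]; split.
- rewrite /template; apply: card_eq_trans HP; apply: inj_card_eq => x y _ _.
  exact: ext_inj.
- exact: eQP.
- apply/seteqP; split => x.
    by move=> Px; exists (@ext d m hd nat x); [exists x|rewrite restr_ext].
  by move=> [_ [y Py <-] <-]; rewrite restr_ext.
- move=> X Xinf; have [e0 e0inj] := nat_inj Xinf.
  have [G HG] := XX e0inj.
  have [Em Eminj] := pow_inj (e0 0%N) HG m.
  exact: (@emb d m hd hdm X Em Eminj k P).
Qed.
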